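(* Let $N$ be a phylogenetic network on $X$, and let $O$ and $R$ be the sets of omnians and reticulations of $N$. Then $$l(N)=p(N)=t(N)=|O|-m(\mathcal{B}_N),$$ where $m(\mathcal{B}_N)$ is the size of a maximum matching of $\mathcal{B}_N$.
   Context: $X$ is a nonempty finite set. A phylogenetic network on $X$ is a rooted acyclic digraph with no parallel arcs such that: the unique root has out-degree at least one; $X$ is exactly the set of vertices of out-degree zero (leaves), each of in-degree one; every other vertex either has in-degree one and out-degree at least two (a tree vertex) or in-degree at least two and out-degree one (a reticulation). If $|X|=1$, the network may also consist of the single vertex in $X$. An omnian is a non-leaf vertex all of whose children are reticulations (an omnian may itself be a reticulation). $\mathcal{B}_N$ is the bipartite graph with vertex bipartition $\{O,R\}$ (taken as disjoint copies) with an edge $\{o,r\}$ for each arc $(o,r)$ of $N$ with $o\in O$, $r\in R$. A phylogenetic network $N$ on $X$ is tree-based if it can be obtained from some phylogenetic $X$-tree (phylogenetic network with no reticulations) $T$ by first taking a subdivision of $T$ (new vertices are attachment points) and then adding new arcs $(u,v)$ where either $u$ and $v$ are both attachment points, or $u$ is a non-leaf vertex of $T$ and $v$ is an attachment point; equivalently, $N$ has a rooted spanning tree with the same root as $N$ all of whose leaves lie in $X$. Attaching a new leaf to $N$ means subdividing an arc of $N$ with a new vertex $u$ and adding a new leaf $y$ and the arc $(u,y)$. Define: $l(N)$ is the minimum, over all spanning trees of $N$ rooted at the root of $N$, of the number of leaves of the spanning tree not in $X$; $p(N)=d(N)-|X|$ where $d(N)$ is the smallest number of vertex-disjoint directed paths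 of $N$ that partition its vertex set; $t(N)$ is the minimum number of new leaves that need to be attached (successively) to $N$ so that the resulting network is tree-based. *)

(* Defs.v *)
From mathcomp Require Import all_boot.
Set Implicit Arguments. Unset Strict Implicit. Unset Printing Implicit Defensive.

Section Net.
Variable V : finType.
Variable a : rel V.

Definition indeg (v : V) : nat := #|[set u | a u v]|.
Definition outdeg (v : V) : nat := #|[set w | a v w]|.

Definition acyclic : Prop := forall u v, a u v -> ~~ connect a v u.

(* Phylogenetic network on X with root r (vertex set = all of V). *)
Definition phylo_network (r : V) (X : {set V}) : Prop :=
  [/\ X != set0, acyclic, indeg r = 0,
      (forall v, indeg v = 0 -> v = r) &
      ((#|V| = 1 /\ X = [set r]) \/
       [/\ 0 < outdeg r,
           (forall v, (v \in X) = (outdeg v == 0)),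
           (forall v, v \in X -> indeg v = 1) &
           (forall v, v != r -> v \notin X ->
              (indeg v = 1 /\ 2 <= outdeg v) \/ (2 <= indeg v /\ outdeg v = 1))])].

Definition reticulation (v : V) : bool := (2 <= indeg v) && (outdeg v == 1).

Definition omnians (X : {set V}) : {set V} :=
  [set v | (v \notin X) && [forall w, a v w ==> reticulation w]].
Definition reticulations : {set V} := [set v | reticulation v].

(* matchings of B_N: pairs (o, r') stand for edges {o in copy O, r' in copy R} *)
Definition matchingB (X : {set V}) (M : {set V * V}) : bool :=
  [forall e in M, [&& e.1 \in omnians X, e.2 \in reticulations & a e.1 e.2]] &&
  [forall e in M, forall e' in M, ((e.1 == e'.1) || (e.2 == e'.2)) ==> (e == e')].

Definition max_matching_size (X : {set V}) : nat :=
  \max_(M : {set V * V} | matchingB X M) #|M|.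

Definition spanning_tree (r : V) (T : {set V * V}) : Prop :=
  [/\ T \subset [set e | a e.1 e.2],
      (forall v, v != r -> #|[set u | (u, v) \in T]| = 1),
      #|[set u | (u, r) \in T]| = 0 &
      forall v, connect (fun x y => (x, y) \in T) r v].

Definition tree_leaves (T : {set V * V}) : {set V} :=
  [set v | [forall w, (v, w) \notin T]].

Definition tree_based (r : V) (X : {set V}) : Prop :=
  exists T, spanning_tree r T /\ tree_leaves T \subset X.

(* candidate values for l(N) *)
Definition l_cand (r : V) (X : {set V}) (n : nat) : Prop :=
  exists T, spanning_tree r T /\ #|tree_leaves T :\: X| = n.

Definition dpath (s : seq V) : bool :=
  if s is x :: s' then path a x s' else false.

Definition path_partition (P : seq (seq V)) : Prop :=
  [/\ all dpath P, uniq (flatten P) & forall v, v \in flatten P].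

Definition d_cand (n : nat) : Prop :=
  exists P, path_partition P /\ size P = n.

End Net.

(* Attaching a new leaf on arc (x,z): vertices are Some (Some v) for old v,
   Some None for the subdivision vertex u, None for the new leaf y. *)
Definition att_rel (V : finType) (a : rel V) (x z : V) : rel (option (option V)) :=
  fun p q =>
    match p, q with
    | Some (Some p'), Some (Some q') => a p' q' && ((p', q') != (x, z))
    | Some (Some p'), Some None => p' == x
    | Some None, Some (Some q') => q' == z
    | Some None, None => true
    | _, _ => false
    end.

Definition att_leaves (V : finType) (X : {set V}) : {set option (option V)} :=
  None |: [set Some (Some v) | v in X].

(* attach_tb a r X k : attaching k new leaves successively to N can make it tree-based *)
Inductive attach_tb : forall V : finType, rel V -> V -> {set V} -> nat -> Prop :=
| AT0 (V : finType) (a : rel V) (r : V) (X : {set V}) :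
    tree_based a r X -> attach_tb a r X 0
| ATS (V : finType) (a : rel V) (r : V) (X : {set V}) (x z : V) (k : nat) :
    a x z ->
    attach_tb (att_rel a x z) (Some (Some r)) (att_leaves X) k ->
    attach_tb a r X k.+1.

Definition is_min (P : nat -> Prop) (n : nat) : Prop :=
  P n /\ forall m, P m -> n <= m.

(* Main.v *)
Require Import Defs.
From mathcomp Require Import all_boot zify.
Set Implicit Arguments. Unset Strict Implicit. Unset Printing Implicit Defensive.

Section Gen.
Variable V : finType.
Variable a : rel V.

Definition minj (S : {set V * V}) : Prop :=
  forall e e', e \in S -> e' \in S -> (e.1 = e'.1 \/ e.2 = e'.2) -> e = e'.
Definition arcm (S : {set V * V}) : Prop := (forall e, e \in S -> a e.1 e.2) /\ minj S.

Lemma matchingBP X (M : {set V * V}) : matchingB a X M ->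
  (forall e, e \in M -> [/\ e.1 \in omnians a X, e.2 \in reticulations a & a e.1 e.2]) /\ minj M.
Proof.
case/andP=> /forall_inP H1 /forall_inP H2; split.
  by move=> e /H1 /and3P[].
move=> e e' He He' Hor; have /forall_inP /(_ _ He') /implyP := H2 e He.
move=> H; apply/eqP; apply: H; case: Hor => ->; rewrite eqxx ?orbT //.
Qed.

Lemma matchingB_intro X (M : {set V * V}) :
  (forall e, e \in M -> [/\ e.1 \in omnians a X, e.2 \in reticulations a & a e.1 e.2]) -> minj M ->
  matchingB a X M.
Proof.
move=> H1 H2; apply/andP; split; apply/forall_inP => e He.
  by case: (H1 e He) => -> -> ->.
apply/forall_inP => e' He'; apply/implyP => /orP Ho; apply/eqP; apply: H2 => //.
by case: Ho => /eqP ->; [left|right].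
Qed.

Lemma leq_mm X (M : {set V * V}) : matchingB a X M -> #|M| <= max_matching_size a X.
Proof. move=> H; exact: (@leq_bigmax_cond _ (matchingB a X) (fun M : {set V * V} => #|M|) M H). Qed.

Lemma ex_max_matching X : exists M, matchingB a X M /\ #|M| = max_matching_size a X.
Proof.
have H0 : matchingB a X set0.
  by apply: matchingB_intro => [e|e e']; rewrite inE.
have : 0 < #|[pred M : {set V * V} | matchingB a X M]|.
  by apply/card_gt0P; exists set0; rewrite inE.
case/(eq_bigmax_cond (fun M : {set V*V} => #|M|)) => M HM HE.
by exists M; split; [rewrite inE in HM| rewrite /max_matching_size HE].
Qed.

Lemma st_parent r T p q w : spanning_tree a r T -> (p, w) \in T -> (q, w) \in T -> p = q.
Proof.
case=> _ Hp Hr _ Hpw Hqw.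
have [wr|wr] := eqVneq w r.
  subst w; move: Hr => /eqP; rewrite cards_eq0 => /eqP Hr.
  have : p \in [set u | (u, r) \in T] by rewrite inE.
  by rewrite Hr inE.
move: (Hp w wr) => /eqP /cards1P [x Hx].
have : p \in [set u | (u, w) \in T] by rewrite inE.
have : q \in [set u | (u, w) \in T] by rewrite inE.
by rewrite Hx !inE => /eqP -> /eqP ->.
Qed.

Lemma st_arc r T e : spanning_tree a r T -> e \in T -> a e.1 e.2.
Proof. by case=> /subsetP H _ _ _ /H; rewrite inE. Qed.

Definition tchild (T : {set V * V}) v := odflt v [pick w | (v, w) \in T].
Definition ST (T : {set V * V}) : {set V * V} :=
  [set (v, tchild T v) | v in ~: tree_leaves T].

Lemma tchild_in T v : v \notin tree_leaves T -> (v, tchild T v) \in T.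
Proof.
rewrite inE negb_forall => /existsP [w Hw]; rewrite negbK in Hw.
rewrite /tchild; case: pickP => [w' //|/(_ w)]; by rewrite Hw.
Qed.

Lemma ST_arcm r T : spanning_tree a r T -> arcm (ST T) /\ #|ST T| + #|tree_leaves T| = #|V|.
Proof.
move=> Hst; split; last first.
  rewrite card_imset; last by move=> x y [].
  by rewrite addnC cardsC.
split.
  move=> e /imsetP [v]; rewrite inE => Hv ->.
  by apply: (st_arc Hst); apply: tchild_in.
move=> e e' /imsetP [v]; rewrite inE => Hv -> /imsetP [v']; rewrite inE => Hv' -> /=.
case=> [-> //|Heq].
have := st_parent Hst (tchild_in Hv) _.
rewrite Heq => /(_ _ (tchild_in Hv')) ->; done.
Qed.

End Gen.

Section Net.
Variable V : finType.
Variable a : rel V.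
Variable r : V.
Variable X : {set V}.
Hypothesis HN : phylo_network a r X.

Lemma card1_eq (u v : V) : #|V| = 1 -> u = v.
Proof.
move=> H; have /cards1P [x Hx] : #|[set: V]| == 1 by rewrite cardsT H.
have : u \in [set: V] by rewrite inE. have : v \in [set: V] by rewrite inE.
by rewrite Hx !inE => /eqP -> /eqP ->.
Qed.

Lemma net_acyc : acyclic a.
Proof. by case: (HN). Qed.

Lemma noloop v : ~~ a v v.
Proof. by apply/negP => H; move: (net_acyc H); rewrite connect0. Qed.

Lemma net_noarc_X v w : v \in X -> ~~ a v w.
Proof.
move=> Hv; case: (HN) => _ _ _ _ [[H1 _]|[_ HX _ _]].
  by rewrite (card1_eq v w H1) noloop.
apply/negP => Ha; move: Hv; rewrite HX cards_eq0 => /eqP Hs.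
have : w \in [set w | a v w] by rewrite inE.
by rewrite Hs inE.
Qed.

Lemma omnian_notX v : v \in omnians a X -> v \notin X.
Proof. by rewrite inE => /andP []. Qed.

Lemma K1 (S : {set V * V}) : arcm a S ->
  #|S| + #|X| + (#|omnians a X| - max_matching_size a X) <= #|V|.
Proof.
case=> Ha Hm.
set O := omnians a X; set m := max_matching_size a X.
pose Tl := [set e.1 | e in S].
have cTl : #|Tl| = #|S|.
  by apply: card_in_imset => e e' He He' Heq; apply: Hm => //; left.
pose Mo := [set e in S | e.1 \in O].
have mMo : matchingB a X Mo.
  apply: matchingB_intro.
    move=> e; rewrite inE => /andP [He Ho]; split => //; last by apply: Ha.
    move: Ho; rewrite inE => /andP [_ /forallP /(_ e.2) /implyP H].
    by rewrite inE; apply: H; apply: Ha.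
  by move=> e e'; rewrite !inE => /andP [He _] /andP [He' _]; apply: Hm.
have cMo : #|O :&: Tl| = #|Mo|.
  have -> : O :&: Tl = [set e.1 | e in Mo].
    apply/setP => v; rewrite in_setI; apply/andP/imsetP.
      case=> Hv /imsetP [e He Hve]; exists e => //; rewrite /Mo in_set He -Hve; exact Hv.
    case=> e; rewrite /Mo in_set => /andP [He Ho] ->; split => //; apply/imsetP; by exists e.
  apply: card_in_imset => e e'; rewrite !inE => /andP [He _] /andP [He' _] Heq.
  by apply: Hm => //; left.
have lMo := leq_mm mMo.
have dXT : Tl :&: X = set0.
  apply/setP => v; rewrite !inE; apply/negP => /andP [/imsetP [e He Hev] Hv].
  by move: (net_noarc_X e.2 Hv); rewrite Hev Ha.
have dOX : (O :\: Tl) :&: (Tl :|: X) = set0.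
  apply/setP => v; rewrite !inE; apply/negP => /andP [/andP [HnT HO]] /orP [HT|HX].
    by rewrite HT in HnT.
  by move: HO => /andP [HO _]; rewrite HX in HO.
have c1 := cardsUI Tl X. rewrite dXT cards0 addn0 in c1.
have c2 := cardsUI (O :\: Tl) (Tl :|: X). rewrite dOX cards0 addn0 in c2.
have c3 := cardsD O Tl.
have c4 := max_card (O :\: Tl :|: (Tl :|: X)).
rewrite -/O -/m. lia.
Qed.

End Net.

Section K3.
Variable V : finType.
Variable a : rel V.
Variable r : V.
Variable X : {set V}.
Hypothesis HN : phylo_network a r X.

Lemma arc_notr u v : a u v -> v != r.
Proof.
move=> H; apply/eqP => Hv; subst v; case: (HN) => _ _ /eqP H0 _ _.
move: H0; rewrite cards_eq0 => /eqP Hs.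
have : u \in [set u | a u r] by rewrite inE.
by rewrite Hs inE.
Qed.

Lemma ex_parent v : v != r -> exists u, a u v.
Proof.
move=> Hv; case: (HN) => _ _ _ H0 _.
have : indeg a v != 0 by apply/eqP => /H0 Hr; rewrite Hr eqxx in Hv.
rewrite cards_eq0 => /set0Pn [u]; rewrite inE => Hu; by exists u.
Qed.

Lemma indeg1_uniq u u' w : indeg a w = 1 -> a u w -> a u' w -> u = u'.
Proof.
move=> /eqP /cards1P [x Hx] H1 H2.
have : u \in [set u | a u w] by rewrite inE.
have : u' \in [set u | a u w] by rewrite inE.
by rewrite Hx !inE => /eqP -> /eqP ->.
Qed.

Lemma nonret_indeg1 v w : a v w -> ~~ reticulation a w -> indeg a w = 1.
Proof.
move=> Ha Hnr; case: (HN) => _ _ _ _ [[H1 _]|[_ HX HXi Hcl]].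
  by move: (noloop HN v); rewrite (card1_eq v w H1) -{1}(card1_eq v w H1) Ha.
case Hw: (w \in X); first by apply: HXi.
have Hwr := arc_notr Ha.
case: (Hcl w Hwr (negbT Hw)) => [[] //|[H2 H3]].
by move: Hnr; rewrite /reticulation H2 H3 eqxx.
Qed.

Lemma ret_notr w : reticulation a w -> w != r.
Proof.
case/andP=> H _; apply/eqP => Hw; subst w; case: (HN) => _ _ H0 _ _.
by rewrite H0 in H.
Qed.

Definition anc v := [set u | connect a u v].

Lemma anc_lt u v : a u v -> #|anc u| < #|anc v|.
Proof.
move=> Ha; apply: proper_card; apply/properP; split.
  apply/subsetP => x; rewrite !inE => Hx; apply: connect_trans Hx _; exact: connect1.
exists v; rewrite !inE ?connect0 //.
exact: (net_acyc HN Ha).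
Qed.

Lemma K3 : exists T, spanning_tree a r T /\
  #|tree_leaves T :\: X| <= #|omnians a X| - max_matching_size a X.
Proof.
have [M0 [HM0 cM0]] := ex_max_matching a X.
have [HM1 HM2] := matchingBP HM0.
pose par v := if [pick o | (o, v) \in M0] is Some o then o else odflt v [pick u | a u v].
have par_arc : forall v, v != r -> a (par v) v.
  move=> v Hv; rewrite /par; case: pickP => [o Ho|_].
    by case: (HM1 _ Ho).
  case: pickP => [u //|Hn]; have [u Hu] := ex_parent Hv.
  by move: (Hn u); rewrite Hu.
pose T := [set e : V * V | (e.2 != r) && (e.1 == par e.2)].
have HT : spanning_tree a r T.
  split.
  - apply/subsetP => e; rewrite !inE => /andP [H1 /eqP H2]; rewrite H2; exact: par_arc.
  - move=> v Hv; apply/eqP/cards1P; exists (par v); apply/setP => u.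
    by rewrite !inE Hv.
  - apply/eqP; rewrite cards_eq0; apply/eqP/setP => u; by rewrite !inE eqxx.
  - move=> v; move: {2}#|anc v| (leqnn #|anc v|) => n; elim: n v => [|n IH] v Hn.
      have : 0 < #|anc v| by apply/card_gt0P; exists v; rewrite inE connect0.
      lia.
    have [->|Hv] := eqVneq v r; first exact: connect0.
    apply: (connect_trans (IH (par v) _)).
      by have := anc_lt (par_arc v Hv); lia.
    by apply: connect1; rewrite inE /= Hv eqxx.
exists T; split => //.
pose F := [set e.1 | e in M0].
have cF : #|F| = #|M0|.
  by apply: card_in_imset => e e' He He' Heq; apply: HM2 => //; left.
have FO : F \subset omnians a X.
  by apply/subsetP => v /imsetP [e He ->]; case: (HM1 _ He).
have Hsub : tree_leaves T :\: X \subset omnians a X :\: F.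
  apply/subsetP => v; rewrite inE => /andP [HvX Hl].
  have Hleaf : forall w, v != r -> w != r -> par w = v -> False.
    move=> w _ Hw Hp; move: Hl; rewrite inE => /forallP /(_ w).
    by rewrite inE /= Hw Hp eqxx.
  have Hleaf' : forall w, w != r -> par w = v -> False.
    move=> w Hw Hp; move: Hl; rewrite inE => /forallP /(_ w).
    by rewrite inE /= Hw Hp eqxx.
  rewrite inE; apply/andP; split.
    apply/negP => /imsetP [e He Hv]; case: e He Hv => v' w He /= Hv; subst v'.
    case: (HM1 _ He) => _ /= Hret _.
    apply: (Hleaf' w); first by apply: ret_notr; rewrite inE in Hret.
    rewrite /par; case: pickP => [o Ho|/(_ v)]; last by rewrite He.
    by have := HM2 _ _ Ho He (or_intror erefl); case.
  rewrite inE HvX /=; apply/forallP => w; apply/implyP => Ha.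
  apply/negPn/negP => Hnr.
  have Hw := arc_notr Ha.
  apply: (Hleaf' w Hw).
  rewrite /par; case: pickP => [o Ho|_].
    by case: (HM1 _ Ho) => _ /= Hr _; rewrite inE in Hr; rewrite Hr in Hnr.
  case: pickP => [u Hu|/(_ v)]; last by rewrite Ha.
  exact: (indeg1_uniq (nonret_indeg1 Ha Hnr) Hu Ha).
have c1 := subset_leq_card Hsub.
have c2 := cardsD (omnians a X) F.
have : omnians a X :&: F = F by apply/setIidPr.
move=> E; rewrite E cF cM0 in c2; lia.
Qed.

End K3.

Section Paths.
Variable V : finType.
Variable a : rel V.

Lemma size_cover (s : seq V) : uniq s -> (forall v, v \in s) -> size s = #|V|.
Proof.
move=> Hu Hc; have := uniq_size_uniq (enum_uniq V) (s2 := s).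
rewrite Hu cardT => H; apply/eqP; rewrite -H // => v; by rewrite mem_enum Hc.
Qed.

Lemma path_S (s : seq V) x : uniq (x :: s) -> path a x s ->
  exists S : {set V * V}, [/\ arcm a S, (forall e, e \in S -> e.1 \in x :: s /\ e.2 \in s)
      & #|S| + 1 = size (x :: s)].
Proof.
elim: s x => [|y s IH] x.
  move=> _ _; exists set0; split => //; last by rewrite cards0.
    by split => [e|e e']; rewrite inE.
  by move=> e; rewrite inE.
rewrite cons_uniq => /andP [Hx Hu] /= /andP [Hxy Hp].
have [S [[Sa Sm] Sin Sc]] := IH y Hu Hp.
have Hn : (x, y) \notin S.
  by apply/negP => /Sin [/= H _]; rewrite H in Hx.
exists ((x, y) |: S); split.
- split.
    by move=> e; rewrite in_setU1 => /orP [/eqP ->|/Sa].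
  move=> e e'; rewrite !in_setU1 => /orP [/eqP ->|He] /orP [/eqP ->|He'] //=.
  + case=> H; move: (Sin _ He') => [H1 H2].
      by rewrite -H in H1; rewrite H1 in Hx.
    move: Hu; rewrite cons_uniq => /andP [Hy _]; by rewrite H H2 in Hy.
  + case=> H; move: (Sin _ He) => [H1 H2].
      by rewrite H in H1; rewrite H1 in Hx.
    move: Hu; rewrite cons_uniq => /andP [Hy _]; by rewrite -H H2 in Hy.
  + by apply: Sm.
- move=> e; rewrite in_setU1 => /orP [/eqP -> /=|/Sin [H1 H2]].
    by rewrite !inE !eqxx /=.
  by rewrite !inE in H1 *; rewrite H1 H2 !orbT.
- by rewrite cardsU1 Hn /= in Sc *; lia.
Qed.

Lemma list_S (P : seq (seq V)) : all (dpath a) P -> uniq (flatten P) ->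
  exists S : {set V * V}, [/\ arcm a S, (forall e, e \in S -> e.1 \in flatten P /\ e.2 \in flatten P)
      & #|S| + size P = size (flatten P)].
Proof.
elim: P => [|p P IH].
  move=> _ _; exists set0; split => //; last by rewrite cards0.
    by split => [e|e e']; rewrite inE.
  by move=> e; rewrite inE.
move=> /= /andP [Hp HP]; rewrite cat_uniq => /and3P [Hu1 Hdis Hu2].
have [S2 [[Sa2 Sm2] Sin2 Sc2]] := IH HP Hu2.
case: p Hp Hu1 Hdis => [//|x s] /= Hp Hu1 Hdis.
have [S1 [[Sa1 Sm1] Sin1 Sc1]] := path_S Hu1 Hp.
have Hd : forall v, v \in x :: s -> v \in flatten P -> False.
  move=> v H1 H2; move/hasPn: Hdis => /(_ v H2); by rewrite H1.
have HI : S1 :&: S2 = set0.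
  apply/setP => e; rewrite !inE; apply/negP => /andP [/Sin1 [H1 _] /Sin2 [H2 _]].
  exact: (Hd _ H1 H2).
exists (S1 :|: S2); split.
- split; first by move=> e; rewrite inE => /orP [/Sa1|/Sa2].
  move=> e e'; rewrite !inE => /orP [He|He] /orP [He'|He'].
  + exact: Sm1.
  + move: (Sin1 _ He) (Sin2 _ He') => [H1 H2] [H1' H2'].
    case=> H; [apply: False_ind; apply: (Hd e.1) => //; by rewrite H|].
    apply: False_ind; apply: (Hd e.2); first by rewrite inE H2 orbT. by rewrite H.
  + move: (Sin2 _ He) (Sin1 _ He') => [H1 H2] [H1' H2'].
    case=> H; [apply: False_ind; apply: (Hd e.1) => //; by rewrite H|].
    apply: False_ind; apply: (Hd e.2) => //; by rewrite H inE H2' orbT.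
  + exact: Sm2.
- move=> e; rewrite inE => /orP [/Sin1 [H1 H2]|/Sin2 [H1 H2]].
    by rewrite -cat_cons !mem_cat H1 inE H2 orbT.
  by rewrite -cat_cons !mem_cat H1 H2 !orbT.
- have := cardsUI S1 S2; rewrite HI cards0 /= size_cat /=; move: Sc1 Sc2 => /= Sc1 Sc2; lia.
Qed.

Lemma K4 (P : seq (seq V)) : path_partition a P ->
  exists S, arcm a S /\ #|S| + size P = #|V|.
Proof.
case=> Hp Hu Hc; have [S [HS _ Hc2]] := list_S Hp Hu.
by exists S; split => //; rewrite Hc2 size_cover.
Qed.

End Paths.

Section K5.
Variable V : finType.
Variable a : rel V.
Hypothesis Hac : acyclic a.

Lemma succ_notlast (R : rel V) s x u : path R x s -> u \in x :: s -> u != last x s -> exists y, R u y.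
Proof.
elim: s x => [|y s IH] x /=.
  by rewrite inE => _ /eqP ->; rewrite eqxx.
move=> /andP [Hxy Hp]; rewrite inE => /orP [/eqP ->|Hu] Hl.
  by exists y.
exact: (IH y Hp Hu Hl).
Qed.

Lemma pred_notfirst (R : rel V) s x w : path R x s -> w \in s -> exists z, R z w.
Proof.
elim: s x => [|y s IH] x //=.
move=> /andP [Hxy Hp]; rewrite inE => /orP [/eqP ->|Hw].
  by exists x.
exact: (IH y).
Qed.

Definition pathS (S : {set V * V}) (p : seq V) :=
  if p is x :: s then path (fun u v => (u, v) \in S) x s else false.

Lemma flatten_single (s : seq V) : flatten [seq [:: v] | v <- s] = s.
Proof. by elim: s => //= v s ->. Qed.

Lemma K5 n (S : {set V * V}) : #|S| = n -> arcm a S ->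
  exists P, [/\ all (pathS S) P, uniq (flatten P), (forall v, v \in flatten P) &
             size P + #|S| = #|V|].
Proof.
elim: n S => [|n IH] S Hn [Sa Sm].
  have S0 : S = set0 by apply/eqP; rewrite -cards_eq0 Hn.
  exists [seq [:: v] | v <- enum V]; split.
  - by apply/allP => p /mapP [v _ ->].
  - by rewrite flatten_single enum_uniq.
  - by move=> v; rewrite flatten_single mem_enum.
  - by rewrite size_map Hn addn0 cardT.
have [e He] : exists e, e \in S.
  by apply/set0Pn; rewrite -cards_eq0 Hn.
case: e He => u w He.
set S' := S :\ (u, w).
have cS' : #|S'| = n by have := cardsD1 (u, w) S; rewrite He Hn /= add1n => -[].
have aS' : arcm a S'.
  split; first by move=> e0; rewrite inE => /andP [_ /Sa].
  move=> e1 e2; rewrite !inE => /andP [_ H1] /andP [_ H2]; exact: Sm.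
have [P [HpP HuP HcP HsP]] := IH S' cS' aS'.
have HuS : forall y, (u, y) \in S' -> False.
  move=> y; rewrite inE => /andP [Hne Hy]; have E := Sm _ _ Hy He (or_introl erefl).
  by move: Hne; rewrite E set11.
have HwS : forall z, (z, w) \in S' -> False.
  move=> z; rewrite inE => /andP [Hne Hz]; have E := Sm _ _ Hz He (or_intror erefl).
  by move: Hne; rewrite E set11.
have [pu Hpu Hupu] := flattenP (HcP u).
have [pw Hpw Hwpw] := flattenP (HcP w).
case: pu Hpu Hupu => [//|x s] Hpu Hupu.
have Hps : path (fun u v => (u, v) \in S') x s by move/allP: HpP => /(_ _ Hpu).
have Hul : u = last x s.
  apply/eqP; apply/negP => /negP Hne; have [y Hy] := succ_notlast Hps Hupu Hne.
  exact: (HuS y).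
case: pw Hpw Hwpw => [//|x' s'] Hpw Hwpw.
have Hps' : path (fun u v => (u, v) \in S') x' s' by move/allP: HpP => /(_ _ Hpw).
have Hwf : w = x'.
  move: Hwpw; rewrite inE => /orP [/eqP //|Hws].
  have [z Hz] := pred_notfirst Hps' Hws; case: (HwS z Hz).
subst x'.
have Hsub : subrel (fun u v => (u, v) \in S') a.
  by move=> y z; rewrite inE => /andP [_ /Sa].
have Hne : x :: s != w :: s'.
  apply/negP => /eqP [Hx Hs]; subst x s'.
  have Hc : connect a w u.
    rewrite Hul; apply: (path_connect (sub_path Hsub Hps)); exact: mem_last.
  by move: (Hac (Sa _ He)); rewrite Hc.
have Hperm1 := perm_to_rem Hpu.
have Hpw2 : w :: s' \in rem (x :: s) P.
  move: Hpw; rewrite (perm_mem Hperm1) inE => /orP [/eqP E|//].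
  by rewrite E eqxx in Hne.
have Hperm2 := perm_to_rem Hpw2.
set rest := rem (w :: s') (rem (x :: s) P) in Hperm2.
have Hperm : perm_eq P [:: x :: s, w :: s' & rest].
  apply: (perm_trans Hperm1); by rewrite perm_cons.
have Hfl : flatten ((x :: s ++ w :: s') :: rest) = flatten [:: x :: s, w :: s' & rest].
  by rewrite /= -catA.
exists ((x :: s ++ w :: s') :: rest); split.
- rewrite /= cat_path /= -Hul.
  have HS'S : subrel (fun u v => (u, v) \in S') (fun u v => (u, v) \in S).
    by move=> y z; rewrite inE => /andP [].
  rewrite (sub_path HS'S Hps) He (sub_path HS'S Hps') /=.
  apply/allP => p Hp.
  have : p \in P by rewrite (perm_mem Hperm) !inE Hp !orbT.
  move/allP: HpP => H /H; case: p {Hp} => [//|y t] /=; exact: sub_path.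
- by rewrite Hfl -(perm_uniq (perm_flatten Hperm)).
- by move=> v; rewrite Hfl -(perm_mem (perm_flatten Hperm)).
- have Hsz := perm_size Hperm; rewrite cS' Hsz in HsP; rewrite Hn; move: HsP; rewrite /=; move=> HsP. by rewrite -HsP addnS addSn.
Qed.

Lemma K5' (S : {set V * V}) : arcm a S ->
  exists P, path_partition a P /\ size P + #|S| = #|V|.
Proof.
move=> HS; have [P [H1 H2 H3 H4]] := K5 erefl HS.
exists P; split => //; split => //.
apply/allP => p /(allP H1); case: p => [//|x s] /=.
apply: sub_path => y z; exact: (HS.1 (y, z)).
Qed.

End K5.

Lemma connect_inv (T : finType) (e : rel T) (P : T -> Prop) x y :
  connect e x y -> P x -> (forall y z, P y -> e y z -> P z) -> P y.
Proof.
move=> /connectP [p Hp ->] Hx Hs.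
elim: p x Hp Hx => [|z p IH] x //= /andP [Hxz Hp] Hx.
apply: (IH z Hp); exact: Hs Hx Hxz.
Qed.

Lemma connect_map (T T' : finType) (e : rel T) (e' : rel T') (f : T -> T') x y :
  (forall u v, e u v -> e' (f u) (f v)) -> connect e x y -> connect e' (f x) (f y).
Proof.
move=> Hf Hc; apply: (connect_inv (P := fun y => connect e' (f x) (f y)) Hc).
  exact: connect0.
move=> u v Hu Huv; apply: connect_trans Hu _; apply: connect1; exact: Hf.
Qed.

Section Att.
Variable V : finType.
Notation O := (option (option V)).
Notation SS v := (Some (Some v)).

Definition Tp (T : {set V * V}) (b : V) (e : O * O) : bool :=
  match e with
  | (SS p, SS q) => (p, q) \in T
  | (SS p, Some None) => p == b
  | (Some None, None) => true
  | _ => false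
  end.

Lemma card_SS (A : {set O}) (B : {set V}) :
  (forall q, q \in A -> exists v, q = SS v) -> (forall v, (SS v \in A) = (v \in B)) ->
  #|A| = #|B|.
Proof.
move=> H1 H2; have -> : A = [set SS v | v in B].
  apply/setP => q; apply/idP/imsetP.
    by move=> Hq; case: (H1 q Hq) => v Ev; subst q; exists v => //; rewrite -H2.
  by case=> v Hv ->; rewrite H2.
by apply: card_imset => u v [].
Qed.

Lemma attSS (X : {set V}) v : (SS v \in att_leaves X) = (v \in X).
Proof.
rewrite /att_leaves in_setU1 /=.
rewrite mem_imset //; by move=> x y [] .
Qed.

Lemma leafSS (T : {set V * V}) b v :
  (SS v \in tree_leaves [set e | Tp T b e]) = (v != b) && (v \in tree_leaves T).
Proof.
rewrite !inE; apply/forallP/andP.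
  move=> H; split.
    apply/eqP => Hvb; subst v; by move: (H (Some None)); rewrite inE /= eqxx.
  apply/forallP => w; by move: (H (SS w)); rewrite inE.
case=> Hvb /forallP Hl [[w|]|]; rewrite inE /=; [exact: Hl w | exact: Hvb | done].
Qed.

End Att.

Notation SS v := (Some (Some v)).

Lemma C1 n : forall (V : finType) (a : rel V) r X T, spanning_tree a r T -> #|tree_leaves T :\: X| = n ->
  (forall v, v \in tree_leaves T :\: X -> exists w, a v w) -> attach_tb a r X n.
Proof.
elim: n => [|n IH] V a r X T Hst Hc Hch.
  apply: AT0; exists T; split => //; apply/subsetP => v Hv; apply/negPn/negP => HvX.
  move/eqP: Hc; rewrite cards_eq0 => /eqP H0.
  have : v \in tree_leaves T :\: X by rewrite inE HvX Hv.
  by rewrite H0 inE.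
have [b Hb] : exists b, b \in tree_leaves T :\: X by apply/set0Pn; rewrite -cards_eq0 Hc.
have Hbl : forall w, (b, w) \notin T.
  by move: Hb; rewrite inE => /andP [_]; rewrite inE => /forallP.
have [z Hz] := Hch b Hb.
apply: (ATS Hz).
case: (Hst) => Hsub Hpar Hroot Hcon.
pose T' := [set e | Tp T b e].
have Hpar' : forall v, #|[set q | (q, SS v) \in T']| = #|[set p | (p, v) \in T]|.
  move=> v; apply: card_SS.
    by move=> [[p|]|]; rewrite !inE //=; exists p.
  by move=> p; rewrite !inE.
apply: (IH _ _ _ _ T').
- split.
  + apply/subsetP => [[q1 q2]]; rewrite !inE; case: q1 q2 => [[p|]|] [[q|]|] //= H.
    * rewrite (st_arc Hst H) /=; apply/negP => /eqP [E1 E2]; subst p q.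
      by move: (Hbl z); rewrite H.
  + move=> [[v|]|] Hv.
    * rewrite Hpar' Hpar //; apply/eqP => E; subst v; by rewrite eqxx in Hv.
    * apply/eqP/cards1P; exists (SS b); apply/setP => q; rewrite !inE.
      by case: q => [[p|]|] //=.
    * apply/eqP/cards1P; exists (Some None); apply/setP => q; rewrite !inE.
      by case: q => [[p|]|] //=.
  + by rewrite Hpar'.
  + have HSS : forall v, connect (fun x y => (x, y) \in T') (SS r) (SS v).
      move=> v; apply: (connect_map (f := fun v => SS v) _ (Hcon v)).
      by move=> p q H; rewrite inE.
    have Hu : connect (fun x y => (x, y) \in T') (SS r) (Some None).
      apply: connect_trans (HSS b) _; apply: connect1; by rewrite inE /=.
    move=> [[v|]|] //.
    apply: connect_trans Hu _; apply: connect1; by rewrite inE /=.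
- have -> : #|tree_leaves T' :\: att_leaves X| = #|(tree_leaves T :\: X) :\ b|.
    apply: card_SS.
      move=> [[v|]|]; rewrite inE.
      * by exists v.
      * move=> /andP [_]; rewrite inE => /forallP /(_ None); by rewrite inE.
      * by rewrite /att_leaves in_setU1 eqxx.
    by move=> v; rewrite /T' !in_setD leafSS attSS in_set1; case: (v \in X); case: (v == b).
  by have := cardsD1 b (tree_leaves T :\: X); rewrite Hb Hc add1n => -[].
- move=> [[v|]|]; rewrite /T' in_setD ?leafSS ?attSS.
  + move=> /andP [HX /andP [Hvb Hl]].
    have [w Hw] : exists w, a v w by apply: Hch; rewrite in_setD HX Hl.
    by exists (SS w); rewrite /= Hw /=; apply/negP => /eqP [E _]; rewrite E eqxx in Hvb.
  + move=> /andP [_]; rewrite inE => /forallP /(_ None); by rewrite inE.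
  + by rewrite /att_leaves in_setU1 eqxx.
Qed.

Lemma C2 n (V : finType) (a : rel V) r X : attach_tb a r X n -> (forall v, ~~ a v r) ->
  exists T, spanning_tree a r T /\ #|tree_leaves T :\: X| <= n.
Proof.
elim => {n V a r X}.
  move=> V a r X [T [Hst Hl]] _; exists T; split => //.
  have -> : tree_leaves T :\: X = set0 by apply/eqP; rewrite setD_eq0.
  by rewrite cards0.
move=> V a r X x z k Hxz _ IH Hnr.
have Hzr : z != r by apply/eqP => E; subst z; move: (Hnr x); rewrite Hxz.
have Hnr' : forall q, ~~ att_rel a x z q (SS r).
  move=> [[p|]|] //=; first by rewrite (negbTE (Hnr p)).
  by rewrite eq_sym (negbTE Hzr).
have [T' [Hst' Hl']] := IH Hnr'.
have Hst'' := Hst'.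
case: Hst'' => Hsub' Hpar' Hroot' Hcon'.
have harc : forall q1 q2, (q1, q2) \in T' -> att_rel a x z q1 q2.
  by move=> q1 q2 H; move/subsetP: Hsub' => /(_ _ H); rewrite inE.
pose T := [set e : V * V | ((SS e.1, SS e.2) \in T') || ((e == (x, z)) && ((Some None, SS z) \in T'))].
exists T; split.
  split.
  - apply/subsetP => [[p q]]; rewrite !inE /= => /orP [H|/andP [/eqP [-> ->] _] //].
    by move: (harc _ _ H) => /= /andP [].
  - move=> v Hv.
    have HvSS : SS v != SS r by apply/eqP => -[E]; rewrite E eqxx in Hv.
    move: (Hpar' _ HvSS) => /eqP /cards1P [q Hq].
    have Hq' : (q, SS v) \in T'.
      have : q \in [set q] by rewrite inE.
      by rewrite -Hq inE.
    apply/eqP/cards1P; case: q Hq Hq' => [[p|]|] Hq Hq'.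
    + exists p; apply/setP => p'; rewrite !inE /=; apply/idP/eqP.
        case/orP => [H|/andP [/eqP [E1 E2] H]].
          by have := st_parent Hst' H Hq' => -[].
        by subst; have := st_parent Hst' H Hq'.
      by move=> ->; rewrite Hq'.
    + have /eqP Evz := harc _ _ Hq'; subst v.
      exists x; apply/setP => p'; rewrite !inE /=; apply/idP/eqP.
        case/orP => [H|/andP [/eqP [E1] H]]; last exact: E1.
        by have := st_parent Hst' H Hq'.
      by move=> ->; rewrite Hq' eqxx orbT.
    + by have := harc _ _ Hq'.
  - apply/eqP; rewrite cards_eq0; apply/eqP/setP => p; rewrite !inE /=.
    apply/negP => /orP [H|/andP [/eqP [_ E] _]].
      move/eqP: Hroot'; rewrite cards_eq0 => /eqP H0.
      have : SS p \in [set q | (q, SS r) \in T'] by rewrite inE.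
      by rewrite H0 inE.
    by rewrite E eqxx in Hzr.
  - move=> v.
    pose P := fun q : option (option V) => match q with
      | Some (Some v) => connect (fun u w => (u, w) \in T) r v
      | Some None => connect (fun u w => (u, w) \in T) r x
      | None => true end : bool.
    apply: (connect_inv (P := P) (Hcon' (SS v))); first exact: connect0.
    move=> [[p|]|] [[q|]|] //= Hp Hpq; have Ha := harc _ _ Hpq; move: Ha => /= Ha; try done.
    + apply: connect_trans Hp _; apply: connect1; by rewrite inE /= Hpq.
    + by move/eqP: Ha => <-.
    + move/eqP: Ha => E; subst q; apply: connect_trans Hp _; apply: connect1.
      by rewrite inE /= Hpq eqxx orbT.
pose B := tree_leaves T :\: X.
have HB : [set SS v | v in B :\ x] \subset tree_leaves T' :\: att_leaves X.
  apply/subsetP => q /imsetP [v]; rewrite /B !in_setD1 in_setD => /andP [Hvx /andP [HvX Hl]] ->.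
  rewrite in_setD attSS HvX /=; rewrite inE; apply/forallP => [[[w|]|]]; apply/negP => H.
  + move: Hl; rewrite inE => /forallP /(_ w); by rewrite inE /= H.
  + by move: (harc _ _ H) => /= Ex; rewrite Ex in Hvx.
  + by move: (harc _ _ H).
have c1 := subset_leq_card HB.
rewrite card_imset in c1; last by move=> u w [].
have c2 := cardsD1 x B.
rewrite -/B; case: (x \in B) c2 => /= c2; lia.
Qed.

Theorem theorem6 (V : finType) (a : rel V) (r : V) (X : {set V}) :
  phylo_network a r X ->
  let k := #|omnians a X| - max_matching_size a X in
  [/\ is_min (l_cand a r X) k,
      (exists d, is_min (d_cand a) d /\ d - #|X| = k) &
      is_min (attach_tb a r X) k].
Proof.
move=> HN k.
have LB : forall T, spanning_tree a r T -> k <= #|tree_leaves T :\: X|.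
  move=> T HT; have [HS cS] := ST_arcm HT.
  have := K1 HN HS; rewrite -/k => c1.
  have c2 := cardsD (tree_leaves T) X.
  have c3 := subset_leq_card (subsetIr (tree_leaves T) X).
  lia.
have [T0 [Hst0 Hb0]] := K3 HN.
have Hb0e : #|tree_leaves T0 :\: X| = k by have := LB _ Hst0; rewrite -/k in Hb0; lia.
have PLB : forall P, path_partition a P -> #|X| + k <= size P.
  move=> P HP; have [S [HS cS]] := K4 HP.
  have := K1 HN HS; rewrite -/k; lia.
split.
- split; first by exists T0.
  by move=> m [T [HT <-]]; apply: LB.
- exists (#|X| + k); split; last by lia.
  split; last by move=> m [P [HP <-]]; apply: PLB.
  have [HS cS] := ST_arcm Hst0.
  have [P [HP cP]] := K5' (net_acyc HN) HS.
  exists P; split => //.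
  have := PLB _ HP.
  have c2 := cardsD (tree_leaves T0) X.
  have c3 := subset_leq_card (subsetIr (tree_leaves T0) X).
  lia.
- split.
    apply: (C1 Hst0 Hb0e) => v; rewrite in_setD => /andP [HvX _].
    case: (HN) => _ _ _ _ [[H1 HX]|[_ HX _ _]].
      by move: HvX; rewrite HX inE (card1_eq v r H1) eqxx.
    have : outdeg a v != 0 by rewrite -HX.
    by rewrite cards_eq0 => /set0Pn [w]; rewrite inE => Hw; exists w.
  move=> m Hm; have Hnr : forall v, ~~ a v r.
    by move=> v; apply/negP => /(arc_notr HN); rewrite eqxx.
  have [T [HT Hc]] := C2 Hm Hnr.
  have := LB _ HT; lia.
Qed.
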